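(* Let $\Delta\ge3$. For every graph $G$ with maximum degree at most $\Delta$, the total Thue choice number of $G$ is at most $17.9856\,\Delta^2$; that is, for every assignment $L$ of a list $L(x)$ of colours to each $x\in V(G)\cup E(G)$ with $|L(x)|\ge 17.9856\,\Delta^2$ for all $x$, there exists a total Thue colouring $\varphi$ of $G$ with $\varphi(x)\in L(x)$ for all $x\in V(G)\cup E(G)$.
   Context: Graphs are finite and simple. A sequence is nonrepetitive if no block of consecutive terms has the form $r_1\dots r_nr_1\dots r_n$ with $n\ge1$. A (strong) total Thue colouring of $G$ is a colouring of $V(G)\cup E(G)$ such that for every path $v_1,e_1,v_2,\dots,e_{k-1},v_k$ in $G$ the sequence of colours of $v_1,e_1,\dots,v_k$ is nonrepetitive, the sequence of colours of $v_1,\dots,v_k$ is nonrepetitive, and the sequence of colours of $e_1,\dots,e_{k-1}$ is nonrepetitive. $G$ is nonrepetitively total $l$-choosable if for every list assignment $L:V(G)\cup E(G)\to 2^{\mathbb N}$ with all lists of size at least $l$ there is a total Thue colouring choosing each colour from the associated list; the total Thue choice number is the minimum such $l$. *)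

(* Defs.v *)
From mathcomp Require Import all_boot.
Set Implicit Arguments. Unset Strict Implicit. Unset Printing Implicit Defensive.

Definition nonrepetitive (s : seq nat) : Prop :=
  forall i n : nat, 0 < n -> i + n + n <= size s ->
    take n (drop i s) <> take n (drop (i + n) s).

Definition simple_graph (T : finType) (adj : rel T) : Prop :=
  symmetric adj /\ irreflexive adj.

Definition max_degree_le (T : finType) (adj : rel T) (D : nat) : Prop :=
  forall v : T, #|[set u | adj v u]| <= D.

Definition is_gpath (T : finType) (adj : rel T) (p : seq T) : Prop :=
  match p with
  | [::] => False
  | x :: q => path adj x q && uniq p
  end.

(* Edges are represented as 2-element vertex sets [set x; y]. *)
Definition edge_colours (T : finType) (ce : {set T} -> nat) (p : seq T)
  : seq nat :=
  map (fun xy : T * T => ce [set xy.1; xy.2]) (zip p (behead p)).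

Fixpoint total_colours (T : finType) (cv : T -> nat) (ce : {set T} -> nat)
  (p : seq T) : seq nat :=
  match p with
  | [::] => [::]
  | x :: q =>
      match q with
      | [::] => [:: cv x]
      | y :: _ => cv x :: ce [set x; y] :: total_colours cv ce q
      end
  end.

Definition total_thue (T : finType) (adj : rel T)
  (cv : T -> nat) (ce : {set T} -> nat) : Prop :=
  forall p : seq T, is_gpath adj p ->
    [/\ nonrepetitive (total_colours cv ce p),
        nonrepetitive (map cv p)
      & nonrepetitive (edge_colours ce p)].

(* G is nonrepetitively total l-choosable, with lists given as finite
   sets of colours (seq nat; size counted without duplicates). *)
Definition list_total_thue_colourable (T : finType) (adj : rel T)
  (big_enough : nat -> Prop) : Prop :=
  forall (Lv : T -> seq nat) (Le : {set T} -> seq nat),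
    (forall v, big_enough (size (undup (Lv v)))) ->
    (forall x y, adj x y -> big_enough (size (undup (Le [set x; y])))) ->
    exists (cv : T -> nat) (ce : {set T} -> nat),
      [/\ forall v, cv v \in Lv v,
          forall x y, adj x y -> ce [set x; y] \in Le [set x; y]
        & total_thue adj cv ce].

(* Main.v *)
Require Import Defs.
From mathcomp Require Import all_boot zify.
From Stdlib Require Import ClassicalEpsilon.
Set Implicit Arguments. Unset Strict Implicit. Unset Printing Implicit Defensive.


Lemma size_flat_le (A : eqType) (B : Type) (s : seq A) (f : A -> seq B) k :
  (forall x, x \in s -> size (f x) <= k) -> size (flatten (map f s)) <= size s * k.
Proof.
elim: s => [|x s IH] H //=.
rewrite size_cat mulSn leq_add ?H ?mem_head //.
by apply: IH => y ys; apply: H; rewrite inE ys orbT.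
Qed.

Section Walks.
Variables (T : finType) (adj : rel T) (D : nat).
Hypothesis hsym : symmetric adj.
Hypothesis hdeg : forall v : T, #|[set u | adj v u]| <= D.

Definition wlk (q : seq T) := if q is x :: r then path adj x r else false.

Fixpoint walks (m : nat) (a : T) : seq (seq T) :=
  match m with
  | 0 => [:: [:: a]]
  | m'.+1 => flatten [seq map (cons a) (walks m' b) | b <- enum [set u | adj a u]]
  end.

Lemma size_walks m a : size (walks m a) <= D ^ m.
Proof.
elim: m a => [|m IH] a //=.
apply: (leq_trans (size_flat_le (k := D ^ m) _)).
  by move=> b _; rewrite size_map IH.
by rewrite expnS leq_mul2r -cardE hdeg orbT.
Qed.

Lemma walksP m a q : q \in walks m a -> wlk q /\ head a q = a /\ size q = m.+1.
Proof.
elim: m a q => [|m IH] a q /=; first by rewrite inE => /eqP ->.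
move=> /flattenP [s /mapP [b]]; rewrite mem_enum inE => hab -> /mapP [r hr ->] /=.
have [h1 [h2 h3]] := IH _ _ hr.
case: r hr h1 h2 h3 => // c r hr /= h1 h2 h3; subst c.
by rewrite hab h1 h3.
Qed.

Lemma walksP2 x r : path adj x r -> (x :: r) \in walks (size r) x.
Proof.
elim: r x => [|y r IH] x /=; first by rewrite inE.
move=> /andP [hxy hp].
apply/flattenP; exists [seq x :: i | i <- walks (size r) y].
  by apply/mapP; exists y => //; rewrite mem_enum inE.
by rewrite mem_map; [exact: IH | move=> ? ? []].
Qed.

Definition walksB m a := map rev (walks m a).

Lemma wlk_rev q : wlk (rev q) = wlk q.
Proof.
case: q => // x r.
rewrite [in LHS]lastI rev_rcons /= rev_path /=.
by apply: eq_path => a b /=; rewrite hsym.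
Qed.

Lemma size_walksB m a : size (walksB m a) <= D ^ m.
Proof. by rewrite size_map size_walks. Qed.

Lemma walksBP2 x r : path adj x r -> (x :: r) \in walksB (size r) (last x r).
Proof.
move=> hq; rewrite /walksB.
have -> : x :: r = rev (rev (x :: r)) by rewrite revK.
rewrite mem_map; last exact: (can_inj revK).
have : wlk (rev (x :: r)) by rewrite wlk_rev.
rewrite lastI rev_rcons /= => /walksP2.
by rewrite size_rev size_belast.
Qed.
End Walks.


Section Seqs.
Variable T : finType.
Notation X := (T + {set T})%type.

Definition vseq (p : seq T) : seq X := map inl p.
Definition eseq (p : seq T) : seq X :=
  map (fun xy : T * T => inr [set xy.1; xy.2]) (zip p (behead p)).
Fixpoint tseq (p : seq T) : seq X :=
  match p with
  | [::] => [::]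
  | x :: q => match q with
              | [::] => [:: inl x]
              | y :: _ => inl x :: inr [set x; y] :: tseq q
              end
  end.

Lemma eseq_cons x y q : eseq [:: x, y & q] = inr [set x; y] :: eseq (y :: q).
Proof. by []. Qed.

Lemma eseq1 x : eseq [:: x] = [::]. Proof. by []. Qed.

Lemma size_tseq p : size (tseq p) = (size p + size p).-1.
Proof.
elim: p => [|x [|y q] IH] //=.
by rewrite IH /=; lia.
Qed.

Lemma size_eseq p : size (eseq p) = (size p).-1.
Proof. by rewrite /eseq size_map size_zip size_behead; case: p => //= x p; lia. Qed.

Lemma drop_tseq j p : drop (j + j) (tseq p) = tseq (drop j p).
Proof.
elim: p j => [|x [|y q] IH] [|j] //=.
by rewrite addnS /=; exact: IH.
Qed.

Lemma take_tseq n p : take (n + n) (tseq p) = take (n + n) (tseq (take n.+1 p)).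
Proof.
elim: p n => [|x [|y q] IH] [|n] //=.
by rewrite addnS /=; congr (_ :: _ :: _); exact: IH.
Qed.

Lemma drop_eseq i p : drop i (eseq p) = eseq (drop i p).
Proof.
elim: p i => [|x [|y q] IH] [|i] //=.
Qed.

Lemma take_eseq m p : take m (eseq p) = eseq (take m.+1 p).
Proof.
elim: p m => [|x [|y q] IH] [|m] //=.
by rewrite eseq_cons; congr (_ :: _); exact: IH.
Qed.

Lemma tseq_colours (c : X -> nat) p :
  total_colours (fun a => c (inl a)) (fun e => c (inr e)) p = map c (tseq p).
Proof. by elim: p => [|x [|y q] IH] //=; congr (_ :: _ :: _); exact: IH. Qed.

Lemma eseq_colours (c : X -> nat) p :
  edge_colours (fun e => c (inr e)) p = map c (eseq p).
Proof. by rewrite /edge_colours /eseq -map_comp. Qed.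

Lemma vseq_colours (c : X -> nat) p : map (fun a => c (inl a)) p = map c (vseq p).
Proof. by rewrite /vseq -map_comp. Qed.

Lemma mem_tseq_inl u p : (inl u \in tseq p) = (u \in p).
Proof.
elim: p => [|x [|y q] IH] //=; rewrite !inE //.
by rewrite IH inE.
Qed.

Lemma mem_vseq_inl u p : (inl u \in vseq p) = (u \in p).
Proof. by rewrite /vseq mem_map // => a b []. Qed.

Lemma mem_eseq_tseq e p : inr e \in eseq p -> inr e \in tseq p.
Proof.
elim: p => [|x [|y q] IH] //=.
by rewrite eseq_cons !inE /= => /orP [-> //| /IH ->]; rewrite !orbT.
Qed.

Lemma mem_tseq_inr e p : inr e \in tseq p ->
  exists q1 a b q2, p = rcons q1 a ++ b :: q2 /\ e = [set a; b].
Proof.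
elim: p => [|x [|y q] IH] //=; rewrite !inE //=.
case/orP => [/eqP [->]|]; first by exists [::], x, y, q.
move/IH => [q1 [a [b [q2 [h1 h2]]]]].
by exists (x :: q1), a, b, q2; rewrite h1.
Qed.

Lemma mem_tseq_inl2 u p : inl u \in tseq p -> exists q1 q2, p = rcons q1 u ++ q2.
Proof.
rewrite mem_tseq_inl => /splitPr [q1 q2].
by exists q1, q2; rewrite cat_rcons.
Qed.

Lemma tseq_edge_mem e p x : inr e \in tseq p -> x \in e -> x \in p.
Proof.
move/mem_tseq_inr => [q1 [a [b [q2 [-> ->]]]]].
by rewrite !inE mem_cat mem_rcons !inE => /orP [/eqP->|/eqP->]; rewrite eqxx /= ?orbT.
Qed.

Lemma uniq_tseq p : uniq p -> uniq (tseq p).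
Proof.
elim: p => [|x [|y q] IH] // /andP [hx hu].
change (uniq [:: inl x, inr [set x; y] & tseq (y :: q)]).
rewrite !cons_uniq IH // andbT in_cons mem_tseq_inl (negbTE hx) orbF; apply/andP; split => //.
apply/negP => /tseq_edge_mem hm.
have hxq : x \in y :: q by apply: hm; rewrite !inE eqxx.
by rewrite hxq in hx.
Qed.

Lemma uniq_eseq p : uniq p -> uniq (eseq p).
Proof.
elim: p => [|x [|y q] IH] // /andP [hx hu].
rewrite eseq_cons /= IH // andbT.
apply/negP => /mem_eseq_tseq /tseq_edge_mem hm.
have hxq : x \in y :: q by apply: hm; rewrite !inE eqxx.
by rewrite hxq in hx.
Qed.

Lemma uniq_vseq p : uniq p -> uniq (vseq p).
Proof. by move=> h; rewrite map_inj_uniq // => a b []. Qed.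

End Seqs.


Section Wk.
Variables (T : finType) (adj : rel T) (D : nat).
Hypothesis hsym : symmetric adj.
Hypothesis hirr : irreflexive adj.
Hypothesis hdeg : forall v : T, #|[set u | adj v u]| <= D.
Notation X := (T + {set T})%type.
Notation wlk := (wlk adj).
Notation walks := (walks adj).
Notation walksB := (walksB adj).

Definition orient (e : {set T}) : seq (T * T) :=
  if #|e| == 2 then [seq (a, b) | a <- enum e, b <- enum e] else [::].

Lemma size_orient e : size (orient e) <= 4.
Proof.
rewrite /orient; case: eqP => // h.
by rewrite size_allpairs -cardE h.
Qed.

Lemma mem_orient a b : a != b -> (a, b) \in orient [set a; b].
Proof.
move=> hab; rewrite /orient cards2 hab /=.
by apply/allpairsP; exists (a, b); rewrite !mem_enum !inE !eqxx ?orbT.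
Qed.

Definition Wk (v : X) (k : nat) : seq (seq T) :=
  match v with
  | inl u => flatten [seq flatten [seq [seq x ++ behead y | y <- walks (k.-1 - j) u]
                                   | x <- walksB j u] | j <- iota 0 k]
  | inr e => flatten [seq flatten [seq flatten [seq [seq x ++ y | y <- walks (k.-2 - j) ab.2]
                                   | x <- walksB j ab.1] | j <- iota 0 k.-1] | ab <- orient e]
  end.

Lemma size_Wk_inl u k : size (Wk (inl u) k) <= k * D ^ k.-1.
Proof.
rewrite /Wk; apply: (leq_trans (size_flat_le (k := D ^ k.-1) _)); last by rewrite size_iota.
move=> j; rewrite mem_iota add0n => /andP [_ hj].
apply: (leq_trans (size_flat_le (k := D ^ (k.-1 - j)) _)).
  by move=> x _; rewrite size_map size_walks.
have -> : D ^ k.-1 = D ^ j * D ^ (k.-1 - j) by rewrite -expnD subnKC //; lia.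
by rewrite leq_mul2r size_walksB ?orbT.
Qed.

Lemma size_Wk_inr e k : size (Wk (inr e) k) <= 4 * (k.-1 * D ^ k.-2).
Proof.
rewrite /Wk; apply: (leq_trans (size_flat_le (k := k.-1 * D ^ k.-2) _)); last first.
  by rewrite leq_mul2r size_orient orbT.
move=> ab _.
apply: (leq_trans (size_flat_le (k := D ^ k.-2) _)); last by rewrite size_iota.
move=> j; rewrite mem_iota add0n => /andP [_ hj].
apply: (leq_trans (size_flat_le (k := D ^ (k.-2 - j)) _)).
  by move=> x _; rewrite size_map size_walks.
have -> : D ^ k.-2 = D ^ j * D ^ (k.-2 - j) by rewrite -expnD subnKC //; lia.
by rewrite leq_mul2r size_walksB ?orbT.
Qed.

Lemma wlk_split q1 u q2 : wlk (rcons q1 u ++ q2) ->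
  wlk (rcons q1 u) /\ path adj u q2.
Proof.
case: q1 => [|c r] /=; first by [].
by rewrite cat_path last_rcons => /andP [-> ->].
Qed.

Lemma walksB_rcons q1 u : wlk (rcons q1 u) -> rcons q1 u \in walksB (size q1) u.
Proof.
case: q1 => [|c r] /=.
  by move=> _; rewrite /walksB; apply/mapP; exists [:: u]; rewrite ?inE.
move=> h; have := walksBP2 hsym h.
by rewrite last_rcons size_rcons.
Qed.

Lemma mem_Wk v q : wlk q -> v \in tseq q -> q \in Wk v (size q).
Proof.
case: v => [u|e] hq hv /=.
  have [q1 [q2 hq12]] := mem_tseq_inl2 hv; subst q.
  have [h1 h2] := wlk_split hq.
  apply/flattenP; eexists.
    apply/mapP; exists (size q1); last reflexivity.
    by rewrite mem_iota leq0n add0n size_cat size_rcons /=; lia.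
  apply/allpairsPdep; exists (rcons q1 u), (u :: q2); split => //.
    exact: walksB_rcons.
  have -> : (size (rcons q1 u ++ q2)).-1 - size q1 = size q2.
    by rewrite size_cat size_rcons; lia.
  exact: walksP2.
have [q1 [a [b [q2 [hq12 he]]]]] := mem_tseq_inr hv; subst q e.
have [h1 h2] := wlk_split hq.
move: h2 => /= /andP [hab h2].
apply/flattenP; eexists.
  apply/mapP; exists (a, b); last reflexivity.
  apply: mem_orient.
  by apply/eqP => hh; subst b; move: hab; rewrite hirr.
apply/flattenP; eexists.
  apply/mapP; exists (size q1); last reflexivity.
  by rewrite mem_iota leq0n add0n size_cat size_rcons /=; lia.
apply/allpairsPdep; exists (rcons q1 a), (b :: q2); split => //=.
  exact: walksB_rcons.
have -> : (size (rcons q1 a ++ b :: q2)).-2 - size q1 = size q2.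
  by rewrite size_cat size_rcons /=; lia.
exact: walksP2.
Qed.
End Wk.


Definition pb (P : Prop) : bool := if excluded_middle_informative P then true else false.
Lemma pbP P : reflect P (pb P).
Proof. by rewrite /pb; case: excluded_middle_informative => h; constructor. Qed.

Lemma card_bigcup_seq (I : eqType) (U : finType) (r : seq I) (A : I -> {set U}) :
  #|\bigcup_(i <- r) A i| <= \sum_(i <- r) #|A i|.
Proof.
elim: r => [|i r IH]; first by rewrite !big_nil cards0.
rewrite !big_cons; apply: leq_trans (leq_card_setU _ _) _.
by rewrite leq_add2l.
Qed.

Lemma mem_bigcup_seq (I : eqType) (U : finType) (r : seq I) (A : I -> {set U}) i x :
  i \in r -> x \in A i -> x \in \bigcup_(j <- r) A j.
Proof.
elim: r => [|j r IH] //; rewrite inE big_cons in_setU => /orP [/eqP <- -> //| /IH h /h ->].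
by rewrite orbT.
Qed.

Lemma wlkE (T : finType) (adj : rel T) q : wlk adj q = (q != [::]) && sorted adj q.
Proof. by case: q. Qed.

Lemma wlk_sub (T : finType) (adj : rel T) p k i :
  wlk adj p -> 0 < k -> i < size p -> wlk adj (take k (drop i p)).
Proof.
rewrite !wlkE => /andP [_ hs] hk hi; rewrite take_sorted ?drop_sorted // andbT.
by rewrite -size_eq0 size_take size_drop -lt0n; case: ifP => h; rewrite // subn_gt0.
Qed.


Lemma sum_le_size (I : eqType) (r : seq I) (F : I -> nat) k :
  (forall x, x \in r -> F x <= k) -> \sum_(x <- r) F x <= size r * k.
Proof.
elim: r => [|x r IH] H; first by rewrite big_nil.
rewrite big_cons mulSn leq_add ?H ?mem_head //.
by apply: IH => y hy; apply: H; rewrite inE hy orbT.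
Qed.

Lemma mul_div_le a b G : 0 < a -> a * (G %/ (b * a)) <= G %/ b.
Proof.
move=> ha; case: b => [|b]; first by rewrite mul0n divn0 muln0.
rewrite leq_divRL // mulnC mulnA.
by apply: leq_trans (leq_divM G (b.+1 * a)); rewrite mulnC.
Qed.

Lemma geom_sum N G : \sum_(m <- iota 0 N) G %/ 2 ^ m <= G.*2.
Proof.
elim: N G => [|N IH] G; first by rewrite big_nil.
rewrite -[N.+1]add1n iotaD big_cat /= big_cons big_nil expn0 divn1 addn0.
have -> : iota 1 N = map (addn 1) (iota 0 N) by rewrite -iotaDl.
rewrite big_map.
have -> : \sum_(j <- iota 0 N) G %/ 2 ^ (1 + j) = \sum_(j <- iota 0 N) (G %/ 2) %/ 2 ^ j.
  by apply: eq_bigr => j _; rewrite add1n expnS divnMA.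
apply: leq_trans (leq_add (leqnn G) (IH (G %/ 2))) _.
by rewrite -!addnn leq_add2l addnn -muln2 leq_divM.
Qed.

Lemma arith1 D G m : 0 < D ->
  m.+1 * D ^ (m.+1 + m.+1).-1 * (G %/ (4 * D ^ 2) ^ m) <= D * (G %/ 2 ^ m).
Proof.
move=> hD.
have -> : (m.+1 + m.+1).-1 = (m + m).+1 by lia.
have e1 : D ^ (m + m).+1 = D * (D ^ 2) ^ m by rewrite expnS -expnM mul2n addnn.
have e2 : (4 * D ^ 2) ^ m = 4 ^ m * (D ^ 2) ^ m by rewrite expnMn.
rewrite e1 e2 mulnCA -mulnA leq_mul2l; apply/orP; right.
rewrite -mulnA.
apply: leq_trans (leq_mul (leqnn _) (mul_div_le _ G _)) _; first by rewrite !expn_gt0 hD.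
have h4 : 4 ^ m = 2 ^ m * 2 ^ m by rewrite -expnD addnn -mul2n expnM.
rewrite h4.
apply: leq_trans _ (@mul_div_le (2 ^ m) (2 ^ m) G _); last by rewrite expn_gt0.
by rewrite leq_mul2r ltn_expl ?orbT.
Qed.

Lemma take_tseq_odd (T : finType) n (p : seq T) :
  take (n + n).+1 (tseq p) = tseq (take n.+1 p).
Proof.
elim: p n => [|x [|y q] IH] [|n] //=.
by rewrite addnS /=; congr (_ :: _ :: _); exact: IH.
Qed.

Lemma gpath_wlk (T : finType) (adj : rel T) p : is_gpath adj p -> wlk adj p /\ uniq p.
Proof. by case: p => //= x q /andP [-> ->]. Qed.

Section Main.
Variables (T : finType) (adj : rel T) (D : nat).
Hypothesis hsym : symmetric adj.
Hypothesis hirr : irreflexive adj.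
Hypothesis hdeg : forall v : T, #|[set u | adj v u]| <= D.
Variable l : nat.
Variables (Lv : T -> seq nat) (Le : {set T} -> seq nat).
Hypothesis hLv : forall v, l < size (undup (Lv v)).
Hypothesis hLe : forall x y, adj x y -> l < size (undup (Le [set x; y])).

Notation X := (T + {set T})%type.
Notation K := 'I_l.+1.
Notation wlk := (wlk adj).
Notation Wk := (Wk adj).

Definition redge (e : {set T}) := [exists a, exists b, adj a b && (e == [set a; b])].

Definition lst (x : X) : seq nat :=
  match x with
  | inl a => undup (Lv a)
  | inr e => if redge e then undup (Le e) else iota 0 l.+1
  end.

Lemma lst_size x : l < size (lst x).
Proof.
case: x => [a|e] /=; first exact: hLv.
case: ifP => [/existsP [a /existsP [b /andP [hab /eqP ->]]]|_]; first exact: hLe.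
by rewrite /= size_iota.
Qed.

Lemma lst_uniq x : uniq (lst x).
Proof.
case: x => [a|e]; first exact: undup_uniq.
by rewrite /lst; case: ifP => _; [exact: undup_uniq | exact: iota_uniq].
Qed.

Definition col (f : {ffun X -> K}) (x : X) : nat := nth 0 (lst x) (f x).
Definition idx (x : X) (c : nat) : K := inord (index c (lst x)).

Lemma idx_col (f : {ffun X -> K}) x : idx x (col f x) = f x.
Proof.
apply: val_inj; rewrite /idx /col /= index_uniq ?lst_uniq ?inordK //.
by apply: leq_trans (lst_size x); rewrite ltnS -ltnS ltn_ord.
Qed.

Definition gseq (p : seq T) (s : seq X) := [\/ s = vseq p, s = eseq p | s = tseq p].

Definition blk (s : seq X) i n := take (n + n) (drop i s).

Definition good (S : {set X}) (f : {ffun X -> K}) : Prop :=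
  forall p s i n, is_gpath adj p -> gseq p s -> 0 < n -> i + n + n <= size s ->
    {subset blk s i n <= S} ->
    map (col f) (take n (blk s i n)) <> map (col f) (drop n (blk s i n)).

Definition Gs (S : {set X}) : {set {ffun X -> K}} :=
  [set f : {ffun X -> K} | [forall x, (x \notin S) ==> (f x == ord0)] && pb (good S f)].

Lemma GsP (S : {set X}) (f : {ffun X -> K}) : reflect ((forall x, x \notin S -> f x = ord0) /\ good S f) (f \in Gs S).
Proof.
rewrite inE; apply: (iffP andP) => [[/forallP h /pbP g]|[h g]]; split.
- by move=> x hx; apply/eqP; move: (h x); rewrite hx.
- exact: g.
- by apply/forallP => x; apply/implyP => hx; rewrite h.
- exact/pbP.
Qed.

Lemma good_sub (A B : {set X}) (f g : {ffun X -> K}) : A \subset B -> good B f ->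
  (forall x, x \in A -> g x = f x) -> good A g.
Proof.
move=> hAB hf hfg p s i n hp hs hn hi hsub.
have hsub' : {subset blk s i n <= B} by move=> x /hsub hx; exact: (subsetP hAB).
have e : forall t, {subset t <= blk s i n} -> map (col g) t = map (col f) t.
  by move=> t ht; apply/eq_in_map => x /ht /hsub hx; rewrite /col hfg.
rewrite (e (take n _)); last exact: mem_take.
rewrite (e (drop n _)); last exact: mem_drop.
exact: (hf p s i n hp hs hn hi hsub').
Qed.

Lemma Gs0 : #|Gs set0| = 1.
Proof.
apply/eqP/cards1P; exists [ffun _ => ord0]; apply/setP => f; rewrite inE.
apply/GsP/eqP => [[h _]|->].
  by apply/ffunP => x; rewrite ffunE h // inE.
split=> [x _|]; first by rewrite ffunE.
move=> p s i n _ _ hn hi hsub.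
have : size (blk s i n) > 0 by rewrite size_take size_drop; case: ifP; lia.
case e: (blk s i n) => [|x w] // _.
by have := hsub x; rewrite e mem_head inE => /(_ isT).
Qed.


Lemma partner_prop (c : X -> nat) (t r : seq X) x :
  size t = size r -> uniq (t ++ r) -> map c t = map c r -> x \in t ->
  let y := nth x r (index x t) in [/\ y \in r, y \notin t & c y = c x].
Proof.
move=> hs hu hm hx y.
have hj : index x t < size r by rewrite -hs index_mem.
have yr : y \in r by apply: mem_nth.
split => //.
  move: hu; rewrite cat_uniq => /and3P [_ /hasPn h _].
  by apply/negP => yt; move: (h y yr); rewrite yt.
rewrite /y -(nth_map x 0) // -hm (nth_map x 0) ?nth_index //.
by rewrite hs.
Qed.

Definition half_d (d : seq X) := (size d)./2.
Definition hh (v : X) (d : seq X) :=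
  if v \in take (half_d d) d then take (half_d d) d else drop (half_d d) d.
Definition partner (v : X) (d : seq X) (x : X) :=
  if v \in take (half_d d) d then nth x (drop (half_d d) d) (index x (take (half_d d) d))
  else nth x (take (half_d d) d) (index x (drop (half_d d) d)).
Definition rec (v : X) (d : seq X) (r : {ffun X -> K}) : {ffun X -> K} :=
  [ffun x => if x \in hh v d then idx x (col r (partner v d x)) else r x].
Definition restr (A : {set X}) (f : {ffun X -> K}) : {ffun X -> K} :=
  [ffun x => if x \in A then f x else ord0].

Lemma partner_ok v d n (f : {ffun X -> K}) x :
  uniq d -> size d = n + n -> map (col f) (take n d) = map (col f) (drop n d) ->
  x \in hh v d -> [/\ partner v d x \in d, partner v d x \notin hh v d &
                     col f (partner v d x) = col f x].
Proof.
move=> hu hs hm.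
have hn : half_d d = n by rewrite /half_d hs addnn doubleK.
have st : size (take n d) = size (drop n d) by rewrite size_take size_drop hs; case: ifP; lia.
rewrite /hh /partner hn.
have hu' : uniq (take n d ++ drop n d) by rewrite cat_take_drop.
case: ifP => _ hx.
  have [h1 h2 h3] := partner_prop st hu' hm hx.
  by split => //; apply: mem_drop h1.
have hu2 : uniq (drop n d ++ take n d) by rewrite uniq_catC.
have [h1 h2 h3] := partner_prop (esym st) hu2 (esym hm) hx.
by split => //; apply: mem_take h1.
Qed.

Lemma rec_restr v d n (S' : {set X}) (f : {ffun X -> K}) :
  uniq d -> size d = n + n -> map (col f) (take n d) = map (col f) (drop n d) ->
  {subset d <= S'} -> (forall x, x \notin S' -> f x = ord0) ->
  rec v d (restr (S' :\: [set x in hh v d]) f) = f.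
Proof.
move=> hu hs hm hsub h0; apply/ffunP => x; rewrite ffunE.
case: ifP => hx.
  have [h1 h2 h3] := partner_ok hu hs hm hx.
  have -> : col (restr (S' :\: [set x in hh v d]) f) (partner v d x) = col f (partner v d x).
    by rewrite /col ffunE inE in_set (negbTE h2) (hsub _ h1).
  by rewrite h3 idx_col.
rewrite ffunE inE in_set hx /=; case: ifP => // /negbT hS.
by rewrite h0.
Qed.


Definition gam := 4 * D ^ 2.

Definition Pg (S : {set X}) := forall u, u \notin S -> gam * #|Gs S| <= #|Gs (u |: S)|.

Lemma chain m (A B : {set X}) : A \subset B -> #|B :\: A| = m ->
  (forall C : {set X}, #|C| < #|B| -> Pg C) -> gam ^ m * #|Gs A| <= #|Gs B|.
Proof.
elim: m A => [|m IH] A hAB hc HP.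
  have /eqP : B :\: A = set0 by apply: cards0_eq.
  rewrite setD_eq0 => hBA.
  have -> : A = B by apply/eqP; rewrite eqEsubset hAB hBA.
  by rewrite expn0 mul1n.
have /card_gt0P [u hu] : 0 < #|B :\: A| by rewrite hc.
move: hu; rewrite inE => /andP [huA huB].
have hA'B : u |: A \subset B by rewrite subUset sub1set huB hAB.
have hc' : #|B :\: (u |: A)| = m.
  have -> : B :\: (u |: A) = (B :\: A) :\ u.
    by apply/setP => x; rewrite !inE; case: (x == u); rewrite ?andbF ?andbT //= andbC.
  by move: hc; rewrite (cardsD1 u (B :\: A)) inE huA huB => [[]].
have hlt : #|A| < #|B|.
  apply: proper_card; rewrite properE hAB /=; apply/negP => /subsetP /(_ u huB).
  by rewrite (negbTE huA).
have := HP A hlt u huA.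
have := IH (u |: A) hA'B hc' HP.
rewrite expnS -mulnA => h1 h2.
apply: leq_trans h1; by rewrite mulnCA leq_mul2l h2 orbT.
Qed.


Definition DV v n := [seq vseq q | q <- Wk v (n + n)].
Definition DE v n := [seq eseq q | q <- Wk v (n + n).+1].
Definition DT v n := [seq take (n + n) (drop b (tseq q)) | b <- [:: 0; 1], q <- Wk v n.+1].
Definition Dv (v : X) n :=
  match v with inl _ => DV v n ++ DT v n | inr _ => DE v n ++ DT v n end.

Lemma mem_Dv v p s i n : is_gpath adj p -> gseq p s -> 0 < n -> i + n + n <= size s ->
  v \in blk s i n -> blk s i n \in Dv v n.
Proof.
move=> /gpath_wlk [hw hu] hs hn hi hv.
have hDT : blk s i n \in DT v n -> blk s i n \in Dv v n.
  by case: v {hv} => [u|e] h; rewrite /Dv mem_cat h orbT.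
case: hs => hs; subst s.
- move: hi hv; rewrite /blk /vseq size_map -map_drop -map_take => hi hv.
  set q := take (n + n) (drop i p).
  have hq : size q = n + n by rewrite size_take size_drop; case: ifP; lia.
  have wq : wlk q by apply: wlk_sub => //; lia.
  case: v hv {hDT} => [u|e] /mapP [x hx] // [->].
  rewrite /Dv mem_cat; apply/orP; left; apply/mapP; exists q => //.
  by rewrite -hq; apply: mem_Wk => //; rewrite mem_tseq_inl.
- move: hi hv; rewrite /blk size_eseq drop_eseq take_eseq => hi hv.
  set q := take (n + n).+1 (drop i p).
  have hq : size q = (n + n).+1 by rewrite size_take size_drop; case: ifP; lia.
  have wq : wlk q by apply: wlk_sub => //; lia.
  case: v hv {hDT} => [u|e] hv; first by move: hv => /mapP [x _].
  rewrite /Dv mem_cat; apply/orP; left; apply/mapP; exists q => //.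
  by rewrite -hq; apply: mem_Wk => //; apply: mem_eseq_tseq.
- apply: hDT; move: hi hv; rewrite size_tseq /blk => hi hv.
  have [b hb hib] : exists2 b, b <= 1 & i = i./2 + i./2 + b.
    by exists (odd i); [case: odd | rewrite addnn addnC odd_double_half].
  set j := i./2 in hib.
  set q := take n.+1 (drop j p).
  have hq : size q = n.+1 by rewrite size_take size_drop; case: ifP; lia.
  have wq : wlk q by apply: wlk_sub => //; lia.
  have e : take (n + n) (drop i (tseq p)) = take (n + n) (drop b (tseq q)).
    rewrite hib addnC -drop_drop drop_tseq !take_drop.
    congr drop.
    have hb' : n + n + b <= (n + n).+1 by lia.
    by rewrite -[LHS](take_takel _ hb') take_tseq_odd.
  move: hv; rewrite e => hv.
  apply/allpairsP; exists (b, q); split => //=.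
    by move: hb; case: b {e hv hib} => [|[]] //.
  by rewrite -hq; apply: mem_Wk => //; apply: mem_drop (mem_take hv).
Qed.

Lemma size_Dv v m : 0 < D -> size (Dv v m.+1) <= 16 * (m.+1 * D ^ (m.+1 + m.+1).-1).
Proof.
move=> hD.
set a := D ^ (m.+1 + m.+1).-1.
have hT : size (DT v m.+1) = 2 * size (Wk v m.+2) by rewrite /DT size_allpairs.
case: v hT => [u|e] hT; rewrite /Dv size_cat hT.
  rewrite /DV size_map.
  have h1 := size_Wk_inl hdeg u (m.+1 + m.+1).
  have h2 := size_Wk_inl hdeg u m.+2.
  have hb : D ^ m.+1 <= a by rewrite /a leq_pexp2l //; lia.
  move: h1 h2; rewrite -/a /= => h1 h2.
  have h3 := leq_mul (leqnn m.+2) hb.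
  nia.
rewrite /DE size_map.
have h1 := size_Wk_inr hdeg e (m.+1 + m.+1).+1.
have h2 := size_Wk_inr hdeg e m.+2.
have hb : D ^ m <= a by rewrite /a leq_pexp2l //; lia.
move: h1 h2; rewrite /= -/a => h1 h2.
have h3 := leq_mul (leqnn m.+1) hb.
nia.
Qed.

Definition okd (S' : {set X}) v n (d : seq X) :=
  [&& uniq d, v \in d, all (fun x => x \in S') d & size d == n + n].
Definition Dall S' v := flatten [seq [seq d <- Dv v n | okd S' v n d] | n <- iota 1 #|{: X}|].
Definition Hs v d := [set x in hh v d].
Definition ext (v : X) (g : {ffun X -> K}) (c : K) : {ffun X -> K} :=
  [ffun x => if x == v then c else g x].

Lemma v_in_hh v d : v \in d -> v \in hh v d.
Proof.
rewrite /hh; case: ifP => // /negbT h.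
by rewrite -{1}(cat_take_drop (half_d d) d) mem_cat (negbTE h).
Qed.

Lemma hh_props v d n : uniq d -> size d = n + n -> uniq (hh v d) /\ size (hh v d) = n.
Proof.
move=> hu hs.
have hn : half_d d = n by rewrite /half_d hs addnn doubleK.
rewrite /hh hn; case: ifP => _.
  by rewrite take_uniq // size_take hs; split=> //; case: ifP; lia.
by rewrite drop_uniq // size_drop hs; split=> //; lia.
Qed.

Lemma hh_sub v d : {subset hh v d <= d}.
Proof. by rewrite /hh => x; case: ifP => _; [apply: mem_take | apply: mem_drop]. Qed.

Lemma card_SD (S : {set X}) v d n : v \notin S -> uniq d -> size d = n + n -> v \in d ->
  {subset d <= v |: S} -> #|S :\: ((v |: S) :\: Hs v d)| = n.-1.
Proof.
move=> hvS hu hs hvd hsub.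
have [hhu hhs] := hh_props v hu hs.
have e : S :\: ((v |: S) :\: Hs v d) = Hs v d :\ v.
  apply/setP => x; rewrite !inE.
  case hx: (x \in hh v d) => /=; last by case: (x \in S); rewrite ?orbT ?andbF.
  have := hsub x (hh_sub hx); rewrite !inE andbT.
  case: eqP => [->|_] /=; first by rewrite (negbTE hvS).
  by move=> ->.
rewrite e.
have := cardsD1 v (Hs v d); rewrite inE (v_in_hh hvd) cardsE.
move/card_uniqP: hhu => ->; rewrite hhs => h; by rewrite h.
Qed.

Lemma uniq_gseq p s : is_gpath adj p -> gseq p s -> uniq s.
Proof.
move=> /gpath_wlk [_ hu]; case=> ->.
- exact: uniq_vseq.
- exact: uniq_eseq.
- exact: uniq_tseq.
Qed.

Lemma step (S : {set X}) v : v \notin S -> (forall C : {set X}, #|C| < #|S| -> Pg C) ->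
  0 < D -> gam + 32 * D <= l.+1 -> gam * #|Gs S| <= #|Gs (v |: S)|.
Proof.
move=> hvS HP hD hl.
set S' := v |: S.
set G := #|Gs S|.
set Im := [set ext v p.1 p.2 | p in setX (Gs S) [set: K]].
have cIm : #|Im| = G * l.+1.
  rewrite card_in_imset ?cardsX ?cardsT ?card_ord //.
  move=> [g1 c1] [g2 c2]; rewrite !in_setX /= => /andP [h1 _] /andP [h2 _] e.
  have hv1 := (elimT (GsP S g1) h1).1 v hvS.
  have hv2 := (elimT (GsP S g2) h2).1 v hvS.
  have ec : c1 = c2 by have := congr1 (fun f : {ffun X -> K} => f v) e; rewrite !ffunE eqxx.
  congr pair => //; apply/ffunP => x.
  have := congr1 (fun f : {ffun X -> K} => f x) e; rewrite !ffunE; case: eqP => [->|] //.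
  by rewrite hv1 hv2.
set F := Im :\: Gs S'.
have cF1 : #|Im| <= #|Gs S'| + #|F|.
  apply: leq_trans (leq_card_setU _ _); apply: subset_leq_card.
  by apply/subsetP => f hf; rewrite !inE hf andbT orbN.
have sub : F \subset \bigcup_(d <- Dall S' v) (rec v d @: Gs (S' :\: Hs v d)).
  apply/subsetP => f; rewrite inE => /andP [hnot /imsetP [[g c]]].
  rewrite in_setX /= => /andP [hg _] hf.
  have [g0 ggood] := elimT (GsP S g) hg.
  have fg : forall x, x != v -> f x = g x by move=> x hx; rewrite hf ffunE (negbTE hx).
  have f0 : forall x, x \notin S' -> f x = ord0.
    move=> x; rewrite !inE negb_or => /andP [hxv hxS].
    by rewrite fg // g0.
  apply/negPn/negP => hU; apply: (negP hnot); apply/GsP; split => //.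
  move=> p s i n hp hs hn hi hsub heq.
  have hus := uniq_gseq hp hs.
  have hub : uniq (blk s i n) by rewrite /blk take_uniq // drop_uniq.
  have hsb : size (blk s i n) = n + n by rewrite /blk size_take size_drop; case: ifP; lia.
  case hvw : (v \in blk s i n); last first.
    have hsubS : {subset blk s i n <= S}.
      move=> x hx; have := hsub x hx; rewrite !inE; case: eqP => // xv.
      by subst x; rewrite hx in hvw.
    apply: (ggood p s i n hp hs hn hi hsubS).
    have e : forall t, {subset t <= blk s i n} -> map (col f) t = map (col g) t.
      move=> t ht; apply/eq_in_map => x /ht hx; rewrite /col fg //.
      by apply/eqP => xv; subst x; rewrite hx in hvw.
    rewrite -(e (take n _)); last exact: mem_take.
    by rewrite -(e (drop n _)); last exact: mem_drop.
  apply: (negP hU); apply: (@mem_bigcup_seq _ _ _ _ (blk s i n)).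
    apply/flattenP; exists [seq d <- Dv v n | okd S' v n d].
      apply/mapP; exists n => //.
      rewrite mem_iota hn /=.
      have : #|blk s i n| <= #|{: X}| by apply: max_card.
      move/card_uniqP: hub => ->; rewrite hsb; lia.
    rewrite mem_filter (mem_Dv hp hs hn hi hvw) andbT.
    apply/and4P; split => //; last by rewrite hsb.
    by apply/allP => x /hsub.
  apply/imsetP; exists (restr (S' :\: Hs v (blk s i n)) f); last first.
    by symmetry; exact: (@rec_restr v (blk s i n) n S' f hub hsb heq hsub f0).
  apply/GsP; split.
    by move=> x hx; rewrite ffunE (negbTE hx).
  apply: (good_sub _ ggood).
    apply/subsetP => x; rewrite !inE => /andP [hxH /orP [/eqP xv|xS]] //.
    by subst x; rewrite (v_in_hh hvw) in hxH.
  move=> x hx; rewrite ffunE hx fg //.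
  apply/eqP => xv; subst x; move: hx; rewrite !inE (v_in_hh hvw) //.
have cF2 : #|F| <= \sum_(d <- Dall S' v) #|Gs (S' :\: Hs v d)|.
  apply: leq_trans (subset_leq_card sub) _.
  apply: leq_trans (card_bigcup_seq _ _) _.
  by apply: leq_sum => d _; apply: leq_imset_card.
have cF3 : \sum_(d <- Dall S' v) #|Gs (S' :\: Hs v d)| <= 32 * D * G.
  rewrite /Dall big_flatten /= big_map.
  have -> : iota 1 #|{: X}| = map (addn 1) (iota 0 #|{: X}|) by rewrite -iotaDl.
  rewrite big_map.
  apply: leq_trans (_ : \sum_(m <- iota 0 #|{: X}|) (16 * D) * (G %/ 2 ^ m) <= _).
    apply: leq_sum => m _; rewrite add1n.
    rewrite big_filter big_mkcond /=.
    apply: leq_trans (_ : \sum_(d <- Dv v m.+1) (G %/ gam ^ m) <= _).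
      apply: leq_sum => d _; case: ifP => // hok.
      move/and4P: hok => [hu hvd /allP hsub /eqP hs].
      rewrite leq_divRL ?expn_gt0 ?muln_gt0 ?hD // mulnC.
      have hsz := card_SD hvS hu hs hvd hsub.
      apply: chain => //.
      apply/subsetP => x; rewrite !inE => /andP [hxH /orP [/eqP xv|xS]] //.
      by subst x; rewrite (v_in_hh hvd) in hxH.
    apply: leq_trans (sum_le_size (k := G %/ gam ^ m) _) _ => //.
    apply: leq_trans (leq_mul (size_Dv v m hD) (leqnn _)) _.
    rewrite -mulnA -[16 * D * _]mulnA leq_mul2l; apply/orP; right; exact: arith1.
  rewrite -big_distrr /=.
  apply: leq_trans (leq_mul (leqnn _) (geom_sum _ G)) _.
  rewrite -muln2; nia.
have := leq_trans (leq_trans (eq_leq (esym cIm)) cF1) (leq_add (leqnn _) (leq_trans cF2 cF3)).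
move: hl; rewrite -/G; nia.
Qed.

Lemma all_P : 0 < D -> gam + 32 * D <= l.+1 -> forall S, Pg S.
Proof.
move=> hD hl.
suff H : forall k (S : {set X}), #|S| < k -> Pg S by move=> S; apply: (H #|S|.+1).
elim=> [|k IH] S // hS u hu.
apply: step => // C hC; apply: IH; lia.
Qed.

Lemma Gs_nonempty : 0 < D -> gam + 32 * D <= l.+1 -> forall S, 0 < #|Gs S|.
Proof.
move=> hD hl S.
have hc : #|S :\: set0| = #|S| by rewrite setD0.
have := @chain #|S| set0 S (sub0set _) hc (fun C _ => @all_P hD hl C).
rewrite Gs0 muln1; apply: leq_trans.
by rewrite expn_gt0 /gam muln_gt0 expn_gt0 hD.
Qed.

Lemma nonrep_of_good (f : {ffun X -> K}) p s : good setT f -> is_gpath adj p -> gseq p s ->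
  nonrepetitive (map (col f) s).
Proof.
move=> hg hp hs i n hn; rewrite size_map => hi.
have := hg p s i n hp hs hn hi (fun x _ => in_setT x).
rewrite /blk (take_takel _ (leq_addr n n)) -take_drop drop_drop !map_take !map_drop.
by rewrite addnC.
Qed.

Lemma exists_col : 0 < D -> gam + 32 * D <= l.+1 ->
  exists (cv : T -> nat) (ce : {set T} -> nat),
    [/\ forall v, cv v \in Lv v,
        forall x y, adj x y -> ce [set x; y] \in Le [set x; y]
      & total_thue adj cv ce].
Proof.
move=> hD hl.
have /card_gt0P [f hf] := Gs_nonempty hD hl setT.
have [_ hg] := elimT (GsP _ _) hf.
exists (fun a => col f (inl a)), (fun e => col f (inr e)); split.
- move=> a; rewrite /col -mem_undup; apply: mem_nth.
  by apply: leq_trans (lst_size (inl a)); rewrite ltnS -ltnS ltn_ord.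
- move=> x y hxy.
  have he : redge [set x; y].
    by apply/existsP; exists x; apply/existsP; exists y; rewrite hxy eqxx.
  rewrite /col /= he -mem_undup.
  have := lst_size (inr [set x; y]); rewrite /= he => hs.
  by apply: mem_nth; apply: leq_trans hs; rewrite ltnS -ltnS ltn_ord.
- move=> p hp; split.
  + by rewrite tseq_colours; apply: nonrep_of_good hg hp _; exact: Or33.
  + by rewrite vseq_colours; apply: nonrep_of_good hg hp _; exact: Or31.
  + by rewrite eseq_colours; apply: nonrep_of_good hg hp _; exact: Or32.
Qed.

End Main.

Unset Implicit Arguments.

(* |L(x)| >= 17.9856 * D^2  <=>  179856 * D^2 <= 10000 * |L(x)| *)
Theorem theorem20 (D : nat) (hD : 3 <= D) (T : finType) (adj : rel T)
  (hG : simple_graph adj) (hdeg : max_degree_le adj D) :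
  list_total_thue_colourable adj
    (fun l : nat => 179856 * D ^ 2 <= 10000 * l).
Proof.
move=> Lv Le hv he.
case: hG => hsym hirr.
set l := (17 * D ^ 2).-1.
have hD2 : 9 <= D ^ 2 by rewrite -[9]/(3 ^ 2) leq_exp2r.
have hl1 : l.+1 = 17 * D ^ 2 by rewrite /l prednK //; lia.
have big : forall s, 179856 * D ^ 2 <= 10000 * s -> l < s.
  move=> s h; rewrite -ltnS hl1.
  have h17 : 17 * D ^ 2 <= s.
    rewrite -(@leq_pmul2l 10000) //; apply: leq_trans h.
    by rewrite mulnA leq_mul2r; apply/orP; right.
  by rewrite ltnS.
have hLv : forall v, l < size (undup (Lv v)) by move=> v; apply: big.
have hLe : forall x y, adj x y -> l < size (undup (Le [set x; y])).
  by move=> x y hxy; apply: big; apply: he.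
apply: (exists_col hsym hirr hdeg hLv hLe); first lia.
rewrite hl1 /gam.
have : 3 * D <= D ^ 2 by rewrite expnS expn1 leq_mul2r hD orbT.
lia.
Qed.
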